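(* Fix $1<p<2$. For every sufficiently small $\varepsilon>0$ the following holds: if $(g,h)$ is the unique solution on $[0,\infty)$ of the system (S) described in the context with initial conditions $g(0)=-1$ and $h(0)=\varepsilon$ (i.e. at $r=1$), then $h>0$ and $g<0$ on all of $[0,\infty)$.
   Context: Mass 2 spatial Schwarzschild: $(\mathbb{R}^3\setminus B_1(0),g_s=(1+1/r)^4\delta_{ij})$, $r=|x|$. Let $u_s$ be the radial solution of $\operatorname{div}_{g_s}(|\nabla u_s|^{p-2}\nabla u_s)=0$ with $u_s=1$ at $r=1$, $u_s\to0$ as $r\to\infty$; $w_s=(1-p)\log u_s$, and $r\mapsto t=w_s(r)$ is an increasing bijection $[1,\infty)\to[0,\infty)$. $W_s(t)=\int_{\{w_s=t\}}|\nabla w_s|_{g_s}^2\,da_{g_s}$. System (S) for functions $g,h$ of $t$: $\left(\frac{dg}{dt}+h\right)W_s^2+\left(g-2(p-2)h+(p-1)(3-p)\frac{dh}{dt}\right)W_s\frac{dW_s}{dt}+\frac{(p-1)(5-p)}{4}h\left(\frac{dW_s}{dt}\right)^2=0$ and $\left(\frac{dg}{dt}+h\right)W_s^2-\frac{(p-1)(5-p)}{4}h\left(\frac{dW_s}{dt}\right)^2=0$. (This is a linear first-order system whose solutions exist on all of $[0,\infty)$ and are determined by $g(0),h(0)$.) *)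

(* Defs.v *)
From Stdlib Require Import Reals.
From Coquelicot Require Import Coquelicot.
Open Scope R_scope.

(* Mass-2 spatial Schwarzschild in isotropic coordinates: g_s = phi^4 delta,
   phi(r) = 1 + 1/r, on { |x| >= 1 } in R^3.  All objects below are radial
   and are written as functions of r = |x|. *)
Definition phi (r : R) : R := 1 + / r.

(* |grad f|_{g_s} for a radial function f with f'(r) = du:
   g_s^{ij} d_i f d_j f = phi^{-4} du^2, so |grad f| = |du| / phi^2. *)
Definition grad_norm (r du : R) : R := Rabs du / phi r ^ 2.

(* Radial component (w.r.t. the coordinate field x^i/r) of the vector field
   |grad u|^{p-2} grad u, grad u = phi^{-4} du (x/r); for p<2 it is extended
   by 0 where du = 0 (its continuous extension). *)
Definition p_flux (p r du : R) : R :=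
  if Req_EM_T du 0 then 0
  else Rpower (grad_norm r du) (p - 2) * (du / phi r ^ 4).

(* div_{g_s}(|grad u|^{p-2} grad u) = phi^{-6} d_i(phi^6 V^i) and for a radial
   field V = F(r) x/r one has d_i(phi^6 F x^i/r) = r^{-2} (r^2 phi^6 F)'.
   Hence the (classical) radial p-Laplace equation on r > 1 reads
   (r^2 phi(r)^6 F(r))' = 0. *)
Definition radial_p_harmonic (p : R) (u : R -> R) : Prop :=
  forall r, 1 < r ->
    ex_derive u r /\
    is_derive (fun s => s ^ 2 * phi s ^ 6 * p_flux p s (Derive u s)) r 0.

Definition w_of (p : R) (u : R -> R) (r : R) : R := (1 - p) * ln (u r).

(* Integral over the level set {w_s = w_s(r)} = coordinate sphere of radius r
   of |grad w_s|^2 da_{g_s}; the g_s-area of that sphere is 4 pi r^2 phi^4. *)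
Definition level_integral (p : R) (u : R -> R) (r : R) : R :=
  4 * PI * r ^ 2 * phi r ^ 4 * (grad_norm r (Derive (w_of p u) r)) ^ 2.

Definition system_S (p : R) (W g h : R -> R) : Prop :=
  forall t, 0 < t ->
    ex_derive g t /\ ex_derive h t /\
    (Derive g t + h t) * W t ^ 2
      + (g t - 2 * (p - 2) * h t + (p - 1) * (3 - p) * Derive h t)
          * W t * Derive W t
      + (p - 1) * (5 - p) / 4 * h t * (Derive W t) ^ 2 = 0 /\
    (Derive g t + h t) * W t ^ 2
      - (p - 1) * (5 - p) / 4 * h t * (Derive W t) ^ 2 = 0.

(* Main.v *)
Require Import Defs.
From Stdlib Require Import Reals Lra Ranalysis5 ClassicalEpsilon.
From Coquelicot Require Import Coquelicot.
Open Scope R_scope.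

Lemma at_right_spec (f : R -> R) (x0 l : R) :
  filterlim f (at_right x0) (locally l) ->
  forall eps, 0 < eps -> exists d, 0 < d /\ forall x, x0 < x < x0 + d -> Rabs (f x - l) < eps.
Proof.
  intros H eps Heps.
  destruct (proj1 (filterlim_locally f l) H (mkposreal eps Heps)) as [d Hd].
  exists d; split; [apply cond_pos|].
  intros x Hx. apply (Hd x).
  - unfold ball; simpl; unfold AbsRing_ball; simpl. unfold abs, minus, plus, opp; simpl.
    rewrite Rabs_pos_eq; lra.
  - lra.
Qed.

Lemma pinfty_spec (f : R -> R) (l : R) :
  is_lim f p_infty l ->
  forall eps, 0 < eps -> exists N, forall x, N < x -> Rabs (f x - l) < eps.
Proof.
  intros H eps Heps.
  apply is_lim_spec in H.
  destruct (H (mkposreal eps Heps)) as [N HN].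
  exists N; intros; apply HN; auto.
Qed.

Lemma mvt_closed (f df : R -> R) a b : a < b ->
  (forall c, a <= c <= b -> is_derive f c (df c)) ->
  exists c, a < c < b /\ f b - f a = df c * (b - a).
Proof.
  intros Hab Hd.
  destruct (MVT_cor2 f df a b Hab) as [c [Hc1 Hc2]].
  - intros c Hc. apply is_derive_Reals. auto.
  - exists c. split; auto.
Qed.

Lemma const_on (f : R -> R) a : (forall r, a < r -> is_derive f r 0) ->
  forall r s, a < r -> a < s -> f r = f s.
Proof.
  intros Hd r s Hr Hs.
  destruct (Rtotal_order r s) as [Hrs|[Hrs|Hrs]]; [| subst; reflexivity |].
  - destruct (mvt_closed f (fun _ => 0) r s Hrs) as [c [_ Hc]].
    + intros c Hc; apply Hd; lra.
    + lra.
  - destruct (mvt_closed f (fun _ => 0) s r Hrs) as [c [_ Hc]].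
    + intros c Hc; apply Hd; lra.
    + lra.
Qed.

Lemma incr_on (f df : R -> R) a : (forall r, a < r -> is_derive f r (df r)) ->
  (forall r, a < r -> 0 < df r) -> forall r s, a < r -> r < s -> f r < f s.
Proof.
  intros Hd Hp r s Hr Hrs.
  destruct (mvt_closed f df r s Hrs) as [c [Hc1 Hc]].
  + intros c Hc; apply Hd; lra.
  + assert (0 < df c) by (apply Hp; lra).
    assert (0 < df c * (s - r)) by (apply Rmult_lt_0_compat; lra). lra.
Qed.

Lemma decr_on (f df : R -> R) a : (forall r, a < r -> is_derive f r (df r)) ->
  (forall r, a < r -> df r < 0) -> forall r s, a < r -> r < s -> f s < f r.
Proof.
  intros Hd Hp r s Hr Hrs.
  assert (H := incr_on (fun x => - f x) (fun x => - df x) a).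
  assert (- f r < - f s); [|lra].
  apply H; auto.
  - intros x Hx. apply (is_derive_opp f x (df x)). auto.
  - intros x Hx. specialize (Hp x Hx). lra.
Qed.

Lemma phi_pos r : 0 < r -> 1 < phi r.
Proof. intros. unfold phi. assert (0 < / r) by (apply Rinv_0_lt_compat; auto). lra. Qed.

Lemma phi_le2 r : 1 <= r -> phi r <= 2.
Proof. intros. unfold phi. assert (/ r <= 1). { rewrite <- Rinv_1. apply Rinv_le_contravar; lra. } lra. Qed.

Lemma p_flux_pos p r du : 0 < r -> 0 < du -> 0 < p_flux p r du.
Proof.
  intros Hr Hdu. unfold p_flux. destruct (Req_EM_T du 0); [lra|].
  apply Rmult_lt_0_compat. unfold Rpower; apply exp_pos.
  apply Rdiv_lt_0_compat; auto. apply pow_lt. generalize (phi_pos r Hr); lra.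
Qed.

Lemma p_flux_neg p r du : 0 < r -> du < 0 -> p_flux p r du < 0.
Proof.
  intros Hr Hdu. unfold p_flux. destruct (Req_EM_T du 0); [lra|].
  assert (0 < Rpower (grad_norm r du) (p - 2)) by (unfold Rpower; apply exp_pos).
  assert (du / phi r ^ 4 < 0).
  { unfold Rdiv. assert (0 < / phi r ^ 4). apply Rinv_0_lt_compat, pow_lt. generalize (phi_pos r Hr); lra.
    nra. }
  nra.
Qed.

Lemma nondecr_on (f df : R -> R) a : (forall r, a < r -> is_derive f r (df r)) ->
  (forall r, a < r -> 0 <= df r) -> forall r s, a < r -> r < s -> f r <= f s.
Proof.
  intros Hd Hp r s Hr Hrs.
  destruct (mvt_closed f df r s Hrs) as [c [Hc1 Hc]].
  + intros c Hc; apply Hd; lra.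
  + assert (0 <= df c) by (apply Hp; lra).
    assert (0 <= df c * (s - r)) by (apply Rmult_le_pos; lra). lra.
Qed.

Lemma flux_sign p u : 1 < p < 2 -> radial_p_harmonic p u ->
  filterlim u (at_right 1) (locally 1) -> is_lim u p_infty 0 ->
  exists K, 0 < K /\ forall r, 1 < r -> Derive u r < 0 /\
     r ^ 2 * phi r ^ 6 * p_flux p r (Derive u r) = - K.
Proof.
  intros Hp Hh Hc Hl.
  set (F := fun s => s ^ 2 * phi s ^ 6 * p_flux p s (Derive u s)).
  assert (HF : forall r, 1 < r -> F r = F 2).
  { intros r Hr. apply (const_on F 1); try lra. intros x Hx. apply (Hh x Hx). }
  assert (Hpos : forall r, 1 < r -> 0 < r ^ 2 * phi r ^ 6).
  { intros r Hr. apply Rmult_lt_0_compat; apply pow_lt; generalize (phi_pos r); lra. }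
  destruct (Rlt_or_le (F 2) 0) as [HC|HC].
  - exists (- F 2). split; [lra|]. intros r Hr. split.
    + destruct (Rlt_or_le (Derive u r) 0) as [H|H]; auto.
      exfalso. rewrite <- (HF r Hr) in HC. unfold F in HC.
      destruct H as [H|H].
      * generalize (p_flux_pos p r _ ltac:(lra) H) (Hpos r Hr); intros; nra.
      * rewrite <- H in HC. unfold p_flux in HC. destruct (Req_EM_T 0 0); [|lra]. lra.
    + rewrite <- (HF r Hr). unfold F. ring.
  - exfalso.
    assert (Hd : forall r, 1 < r -> 0 <= Derive u r).
    { intros r Hr. destruct (Rlt_or_le (Derive u r) 0) as [H|H]; auto.
      rewrite <- (HF r Hr) in HC. unfold F in HC.
      generalize (p_flux_neg p r _ ltac:(lra) H) (Hpos r Hr); intros; nra. }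
    assert (Hge : forall r, 1 < r -> 1 <= u r).
    { intros r Hr. apply Rnot_lt_le. intros Hlt.
      destruct (at_right_spec u 1 1 Hc (1 - u r)) as [d [Hd0 Hd1]]; [lra|].
      set (x := 1 + Rmin d (r - 1) / 2).
      assert (Hx1 : 1 < x) by (unfold x; generalize (Rmin_glb_lt d (r-1) 0); intros; lra).
      assert (Hx2 : x < 1 + d) by (unfold x; generalize (Rmin_l d (r-1)); lra).
      assert (Hx3 : x < r) by (unfold x; generalize (Rmin_r d (r-1)); lra).
      specialize (Hd1 x (conj Hx1 Hx2)).
      assert (u x <= u r).
      { apply (nondecr_on u (Derive u) 1); auto. intros y Hy. apply Derive_correct. apply (Hh y Hy). }
      apply Rabs_def2 in Hd1. lra. }
    destruct (pinfty_spec u 0 Hl (1/2)) as [N HN]; [lra|].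
    set (x := Rmax N 1 + 1).
    assert (N < x) by (unfold x; generalize (Rmax_l N 1); lra).
    assert (1 < x) by (unfold x; generalize (Rmax_r N 1); lra).
    specialize (HN x H). specialize (Hge x H0). apply Rabs_def2 in HN. lra.
Qed.

Definition Mf p K r := exp ((ln K - 2 * ln r - (6 - 2 * p) * ln (phi r)) / (p - 1)).

Lemma Mf_pos p K r : 0 < Mf p K r.
Proof. apply exp_pos. Qed.

Lemma u_deriv_formula p u : 1 < p < 2 -> radial_p_harmonic p u ->
  filterlim u (at_right 1) (locally 1) -> is_lim u p_infty 0 ->
  exists K, 0 < K /\ forall r, 1 < r -> is_derive u r (- Mf p K r).
Proof.
  intros Hp Hh Hc Hl.
  destruct (flux_sign p u Hp Hh Hc Hl) as [K [HK HF]].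
  exists K; split; auto. intros r Hr.
  destruct (HF r Hr) as [Hneg Heq].
  assert (Hd : is_derive u r (Derive u r)) by (apply Derive_correct; apply (Hh r Hr)).
  replace (- Mf p K r) with (Derive u r); auto.
  set (m := - Derive u r) in *.
  assert (Hm : 0 < m) by (unfold m; lra).
  assert (Hphi : 1 < phi r) by (apply phi_pos; lra).
  unfold p_flux in Heq. destruct (Req_EM_T (Derive u r) 0) as [E|E]; [lra|].
  unfold grad_norm in Heq. rewrite Rabs_left in Heq by lra.
  fold m in Heq.
  replace (Derive u r) with (- m) in Heq by (unfold m; ring).
  assert (Hq : 0 < m / phi r ^ 2) by (apply Rdiv_lt_0_compat; auto; apply pow_lt; lra).
  assert (Heq2 : r ^ 2 * phi r ^ 2 * Rpower (m / phi r ^ 2) (p - 2) * m = K).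
  { assert (phi r ^ 4 <> 0) by (apply pow_nonzero; lra).
    assert (E6 : phi r ^ 6 = phi r ^ 2 * phi r ^ 4) by ring.
    rewrite E6 in Heq.
    replace K with (- (- K)) by ring. rewrite <- Heq. field.
    all: try lra. }
  assert (Hln : ln K = 2 * ln r + (6 - 2 * p) * ln (phi r) + (p - 1) * ln m).
  { rewrite <- Heq2.
    assert (0 < Rpower (m / phi r ^ 2) (p - 2)) by (unfold Rpower; apply exp_pos).
    assert (0 < r ^ 2) by (apply pow_lt; lra).
    assert (0 < phi r ^ 2) by (apply pow_lt; lra).
    rewrite ln_mult; [| repeat apply Rmult_lt_0_compat; auto | auto].
    rewrite ln_mult; [| repeat apply Rmult_lt_0_compat; auto | auto].
    rewrite ln_mult; auto.
    unfold Rpower. rewrite ln_exp. rewrite ln_div; auto.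
    rewrite !ln_pow by lra. simpl INR. all: try ring; lra. }
  replace (Derive u r) with (- m) by (unfold m; ring).
  unfold Mf. rewrite Hln. replace ((2 * ln r + (6 - 2 * p) * ln (phi r) + (p - 1) * ln m -
   2 * ln r - (6 - 2 * p) * ln (phi r)) / (p - 1)) with (ln m) by (field; lra).
  rewrite exp_ln; auto.
Qed.

Definition muf p r := - (2 * (r - 1) / (p - 1) + 2) / (r * (r + 1)).

Lemma Mf_deriv p K r : 1 < p -> 0 < r -> is_derive (Mf p K) r (Mf p K r * muf p r).
Proof.
  intros Hp Hr. unfold Mf, phi, muf.
  assert (0 < / r) by (apply Rinv_0_lt_compat; auto).
  auto_derive.
  - repeat split; lra.
  - set (E := exp _). field. repeat split; lra.
Qed.

Lemma lim_right_le (f : R -> R) x0 l c d : filterlim f (at_right x0) (locally l) -> 0 < d ->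
  (forall x, x0 < x < x0 + d -> f x <= c) -> l <= c.
Proof.
  intros H Hd Hf. apply Rnot_lt_le. intros Hlt.
  destruct (at_right_spec f x0 l H (l - c)) as [e [He1 He2]]; [lra|].
  set (x := x0 + Rmin d e / 2).
  assert (0 < Rmin d e) by (apply Rmin_glb_lt; auto).
  assert (x0 < x < x0 + d) by (unfold x; generalize (Rmin_l d e); lra).
  assert (x0 < x < x0 + e) by (unfold x; generalize (Rmin_r d e); lra).
  specialize (Hf x H1). specialize (He2 x H2). apply Rabs_def2 in He2. lra.
Qed.

Lemma lim_right_ge (f : R -> R) x0 l c d : filterlim f (at_right x0) (locally l) -> 0 < d ->
  (forall x, x0 < x < x0 + d -> c <= f x) -> c <= l.
Proof.
  intros H Hd Hf. apply Rnot_lt_le. intros Hlt.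
  destruct (at_right_spec f x0 l H (c - l)) as [e [He1 He2]]; [lra|].
  set (x := x0 + Rmin d e / 2).
  assert (0 < Rmin d e) by (apply Rmin_glb_lt; auto).
  assert (x0 < x < x0 + d) by (unfold x; generalize (Rmin_l d e); lra).
  assert (x0 < x < x0 + e) by (unfold x; generalize (Rmin_r d e); lra).
  specialize (Hf x H1). specialize (He2 x H2). apply Rabs_def2 in He2. lra.
Qed.

Lemma lim_inf_ge (f : R -> R) (l : R) c N : is_lim f p_infty l ->
  (forall x, N < x -> c <= f x) -> c <= l.
Proof.
  intros H Hf. apply Rnot_lt_le. intros Hlt.
  destruct (pinfty_spec f l H (c - l)) as [N' HN]; [lra|].
  set (x := Rmax N N' + 1).
  assert (N < x) by (unfold x; generalize (Rmax_l N N'); lra).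
  assert (N' < x) by (unfold x; generalize (Rmax_r N N'); lra).
  specialize (Hf x H0). specialize (HN x H1). apply Rabs_def2 in HN. lra.
Qed.

Lemma lim_inf_le (f : R -> R) (l : R) c N : is_lim f p_infty l ->
  (forall x, N < x -> f x <= c) -> l <= c.
Proof.
  intros H Hf. apply Rnot_lt_le. intros Hlt.
  destruct (pinfty_spec f l H (l - c)) as [N' HN]; [lra|].
  set (x := Rmax N N' + 1).
  assert (N < x) by (unfold x; generalize (Rmax_l N N'); lra).
  assert (N' < x) by (unfold x; generalize (Rmax_r N N'); lra).
  specialize (Hf x H0). specialize (HN x H1). apply Rabs_def2 in HN. lra.
Qed.

Lemma u_bounds p u K : 1 < p ->
  filterlim u (at_right 1) (locally 1) -> is_lim u p_infty 0 ->
  (forall r, 1 < r -> is_derive u r (- Mf p K r)) ->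
  forall r, 1 < r -> 0 < u r < 1.
Proof.
  intros Hp Hc Hl Hd.
  assert (Hdec : forall r s, 1 < r -> r < s -> u s < u r).
  { apply (decr_on u (fun r => - Mf p K r) 1); auto. intros; generalize (Mf_pos p K r); lra. }
  assert (Hnn : forall s, 1 < s -> 0 <= u s).
  { intros s Hs. apply Rnot_lt_le; intros Hneg.
    assert (0 <= u s); [|lra].
    apply (lim_inf_le u 0 (u s) s Hl). intros x Hx. left. apply Hdec; auto. }
  intros r Hr. split.
  - generalize (Hdec r (r + 1) Hr ltac:(lra)) (Hnn (r + 1) ltac:(lra)). lra.
  - assert (u ((1 + r) / 2) <= 1).
    { apply (lim_right_ge u 1 1 _ ((r - 1) / 2) Hc); [lra|].
      intros x Hx. left. apply Hdec; lra. }
    generalize (Hdec ((1 + r) / 2) r ltac:(lra) ltac:(lra)). lra.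
Qed.

Definition bb p := (3 - p) / (p - 1).

Lemma exp_le_mono x y : x <= y -> exp x <= exp y.
Proof. intros [H|H]. left; apply exp_increasing; auto. subst; lra. Qed.

Lemma fup_lim p K : 1 < p < 2 -> 0 < K ->
  is_lim (fun s => Mf p K s * s * (s + 1) / (bb p * (s - 1))) p_infty 0.
Proof.
  intros Hp HK. apply is_lim_spec. intros eps.
  assert (Hb : 0 < bb p) by (unfold bb; apply Rdiv_lt_0_compat; lra).
  assert (He : 0 < eps * bb p / 3) by (generalize (cond_pos eps); intros; apply Rdiv_lt_0_compat; [apply Rmult_lt_0_compat|]; lra).
  set (A := ln K / (p - 1)). set (B := 1 - 2 / (p - 1)).
  assert (HB : B < 0).
  { unfold B. assert (2 / (p - 1) > 2). { apply (Rmult_lt_reg_r (p - 1)); [lra|]. field_simplify; lra. } lra. }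
  set (N := exp ((ln (eps * bb p / 3) - A) / B)).
  simpl. exists (Rmax N 2). intros s Hs.
  assert (Hs2 : 2 < s) by (generalize (Rmax_r N 2); lra).
  assert (HsN : N < s) by (generalize (Rmax_l N 2); lra).
  assert (Hphi : 1 < phi s) by (apply phi_pos; lra).
  assert (Hlnphi : 0 < ln (phi s)) by (rewrite <- ln_1; apply ln_increasing; lra).
  assert (HM : Mf p K s <= exp ((ln K - 2 * ln s) / (p - 1))).
  { unfold Mf. apply exp_le_mono. unfold Rdiv. apply Rmult_le_compat_r.
    left; apply Rinv_0_lt_compat; lra.
    assert (0 <= (6 - 2 * p) * ln (phi s)) by (apply Rmult_le_pos; lra). lra. }
  assert (HMs : Mf p K s * s <= exp (A + B * ln s)).
  { replace (A + B * ln s) with ((ln K - 2 * ln s) / (p - 1) + ln s) by (unfold A, B; field; lra).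
    rewrite exp_plus, exp_ln by lra. apply Rmult_le_compat_r; lra. }
  assert (Hlns : ln N < ln s) by (apply ln_increasing; auto; unfold N; apply exp_pos).
  unfold N in Hlns. rewrite ln_exp in Hlns.
  assert (Hx : A + B * ln s < ln (eps * bb p / 3)).
  { apply (Rmult_lt_compat_r (- B)) in Hlns; [|lra].
    replace ((ln (eps * bb p / 3) - A) / B * - B) with (A - ln (eps * bb p / 3)) in Hlns by (field; lra).
    nra. }
  apply exp_increasing in Hx. rewrite exp_ln in Hx by auto.
  assert (HMpos := Mf_pos p K s).
  rewrite Rminus_0_r. rewrite Rabs_pos_eq.
  2: { apply Rlt_le, Rdiv_lt_0_compat. repeat apply Rmult_lt_0_compat; lra. apply Rmult_lt_0_compat; lra. }
  assert (Mf p K s * s * (s + 1) / (bb p * (s - 1)) <= 3 * (Mf p K s * s) / bb p).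
  { unfold Rdiv. rewrite Rinv_mult.
    assert (0 < / bb p) by (apply Rinv_0_lt_compat; auto).
    assert ((s + 1) * / (s - 1) <= 3).
    { apply (Rmult_le_reg_r (s - 1)); [lra|]. rewrite Rmult_assoc, Rinv_l by lra. lra. }
    assert (0 < Mf p K s * s) by (apply Rmult_lt_0_compat; lra).
    replace (Mf p K s * s * (s + 1) * (/ bb p * / (s - 1))) with ((Mf p K s * s) * / bb p * ((s + 1) * / (s - 1))) by ring.
    replace (3 * (Mf p K s * s) * / bb p) with ((Mf p K s * s) * / bb p * 3) by ring.
    apply Rmult_le_compat_l; [|auto]. apply Rmult_le_pos; lra. }
  assert (3 * (Mf p K s * s) / bb p < eps).
  { apply (Rmult_lt_reg_r (bb p / 3)). apply Rdiv_lt_0_compat; lra.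
    replace (3 * (Mf p K s * s) / bb p * (bb p / 3)) with (Mf p K s * s) by (field; lra).
    replace (eps * (bb p / 3)) with (eps * bb p / 3) by (field). lra. }
  lra.
Qed.

Lemma u_upper p u K : 1 < p < 2 -> 0 < K ->
  is_lim u p_infty 0 ->
  (forall r, 1 < r -> is_derive u r (- Mf p K r)) ->
  forall r, 1 < r -> u r < Mf p K r * r * (r + 1) / (bb p * (r - 1)).
Proof.
  intros Hp HK Hl Hd.
  assert (Hb : 0 < bb p) by (unfold bb; apply Rdiv_lt_0_compat; lra).
  set (D := fun s => Mf p K s * s * (s + 1) / (bb p * (s - 1)) - u s).
  assert (HD : forall s, 1 < s -> is_derive D s (- 2 * Mf p K s * s / (bb p * (s - 1) ^ 2))).
  { intros s Hs. unfold D.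
    assert (H1 := Mf_deriv p K s ltac:(lra) ltac:(lra)).
    assert (H2 := Hd s Hs).
    auto_derive.
    - repeat split; try (eexists; eauto). apply Rmult_integral_contrapositive; split; lra.
    - replace (Derive (fun x => Mf p K x) s) with (Mf p K s * muf p s) by (symmetry; apply is_derive_unique; auto).
      replace (Derive (fun x => u x) s) with (- Mf p K s) by (symmetry; apply is_derive_unique; auto).
      unfold muf, bb. field. repeat split; lra. }
  assert (Hdec : forall r s, 1 < r -> r < s -> D s < D r).
  { apply (decr_on D _ 1 HD). intros s Hs.
    assert (0 < Mf p K s) by apply Mf_pos.
    assert (0 < bb p * (s - 1) ^ 2) by (apply Rmult_lt_0_compat; auto; apply pow_lt; lra).
    assert (0 < 2 * Mf p K s * s / (bb p * (s - 1) ^ 2)).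
    { apply Rdiv_lt_0_compat; auto. nra. }
    replace (-2 * Mf p K s * s / (bb p * (s - 1) ^ 2)) with (- (2 * Mf p K s * s / (bb p * (s - 1) ^ 2))) by (field; lra).
    lra. }
  assert (HlD : is_lim D p_infty 0).
  { replace (Finite 0) with (Finite (0 - 0)) by (f_equal; ring).
    apply is_lim_minus'; auto. apply fup_lim; auto. }
  intros r Hr.
  assert (0 < D r); [|unfold D in *; lra].
  apply Rnot_le_lt. intros Hle.
  assert (0 <= D (r + 1)).
  { apply (lim_inf_le D 0 (D (r + 1)) (r + 1) HlD). intros x Hx. left. apply Hdec; lra. }
  generalize (Hdec r (r + 1) Hr ltac:(lra)). lra.
Qed.

Definition lam p K u r := (p - 1) * Mf p K r / u r.

Lemma w_deriv p u K : 1 < p < 2 -> 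
  filterlim u (at_right 1) (locally 1) -> is_lim u p_infty 0 ->
  (forall r, 1 < r -> is_derive u r (- Mf p K r)) ->
  forall r, 1 < r -> is_derive (w_of p u) r (lam p K u r).
Proof.
  intros Hp Hc Hl Hd r Hr.
  destruct (u_bounds p u K ltac:(lra) Hc Hl Hd r Hr) as [Hu0 Hu1].
  unfold w_of, lam.
  assert (H2 := Hd r Hr).
  auto_derive.
  - split; [eexists; eauto | lra].
  - replace (Derive (fun x => u x) r) with (- Mf p K r) by (symmetry; apply is_derive_unique; auto).
    field. lra.
Qed.

Lemma cont_of_derive (f : R -> R) x l : is_derive f x l -> continuity_pt f x.
Proof.
  intros H. apply is_derive_Reals in H. apply derivable_continuous_pt. exists l. exact H.
Qed.

Lemma w_small p u : 1 < p < 2 -> filterlim u (at_right 1) (locally 1) ->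
  forall eps, 0 < eps -> exists d, 0 < d /\ forall r, 1 < r < 1 + d -> w_of p u r < eps.
Proof.
  intros Hp Hc eps Heps.
  set (e := exp (- eps / (p - 1))).
  assert (He1 : e < 1).
  { unfold e. apply Rlt_le_trans with (exp 0); [| rewrite exp_0; lra]. apply exp_increasing.
    assert (0 < eps / (p - 1)) by (apply Rdiv_lt_0_compat; lra).
    replace (- eps / (p - 1)) with (- (eps / (p - 1))) by (field; lra). lra. }
  assert (He0 : 0 < e) by apply exp_pos.
  destruct (at_right_spec u 1 1 Hc (1 - e) ltac:(lra)) as [d [Hd0 Hd]].
  exists d; split; auto. intros r Hr.
  specialize (Hd r Hr). apply Rabs_def2 in Hd.
  assert (ln e < ln (u r)) by (apply ln_increasing; lra).
  unfold e in H. rewrite ln_exp in H. unfold w_of.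
  apply (Rmult_lt_compat_l (p - 1)) in H; [|lra].
  replace ((p - 1) * (- eps / (p - 1))) with (- eps) in H by (field; lra).
  lra.
Qed.

Lemma w_large p u : 1 < p < 2 -> is_lim u p_infty 0 -> (forall r, 1 < r -> 0 < u r) ->
  forall T, exists N, 1 < N /\ forall r, N < r -> T < w_of p u r.
Proof.
  intros Hp Hl Hpos T.
  set (e := exp (- T / (p - 1))).
  assert (He0 : 0 < e) by apply exp_pos.
  destruct (pinfty_spec u 0 Hl e He0) as [N HN].
  exists (Rmax N 1 + 1). split; [generalize (Rmax_r N 1); lra|].
  intros r Hr.
  assert (HrN : N < r) by (generalize (Rmax_l N 1); lra).
  assert (Hr1 : 1 < r) by (generalize (Rmax_r N 1); lra).
  specialize (HN r HrN). specialize (Hpos r Hr1).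
  rewrite Rminus_0_r, Rabs_pos_eq in HN by lra.
  assert (ln (u r) < ln e) by (apply ln_increasing; lra).
  unfold e in H. rewrite ln_exp in H. unfold w_of.
  apply (Rmult_lt_compat_l (p - 1)) in H; [|lra].
  replace ((p - 1) * (- T / (p - 1))) with (- T) in H by (field; lra).
  lra.
Qed.

Lemma inv_derive (f Wf L df : R -> R) (a0 r0 Ld : R) :
  a0 < r0 ->
  (forall r, a0 < r -> is_derive f r (df r)) ->
  (forall r, a0 < r -> 0 < df r) ->
  is_derive L r0 Ld ->
  (forall r, a0 < r -> Wf (f r) = L r) ->
  is_derive Wf (f r0) (Ld / df r0).
Proof.
  intros Hr0 Hd Hpos HL HW.
  set (lb := (a0 + r0) / 2). set (ub := r0 + 1).
  assert (Hinc : forall x y, a0 < x -> x < y -> f x < f y) by (apply (incr_on f df a0); auto).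
  assert (Hex : forall t, f lb <= t <= f ub -> exists r, lb <= r <= ub /\ f r = t).
  { intros t [Ht1 Ht2].
    destruct Ht1 as [Ht1|Ht1]; [|exists lb; split; [unfold lb, ub; lra | auto]].
    destruct Ht2 as [Ht2|Ht2]; [|exists ub; split; [unfold lb, ub; lra | auto]].
    destruct (IVT_interv (fun r => f r - t) lb ub) as [z [Hz1 Hz2]].
    - intros a Ha. apply continuity_pt_minus. apply (cont_of_derive f a (df a)). apply Hd. unfold lb in *; lra.
      apply continuity_pt_const. intros x y; auto.
    - unfold lb, ub; lra.
    - lra.
    - lra.
    - exists z; split; auto. lra. }
  set (psi := fun t => epsilon (inhabits 0) (fun r => lb <= r <= ub /\ f r = t)).
  assert (Hpsi : forall t, f lb <= t <= f ub -> lb <= psi t <= ub /\ f (psi t) = t).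
  { intros t Ht. unfold psi. apply (epsilon_spec (inhabits 0) (fun r => lb <= r <= ub /\ f r = t)). apply Hex; auto. }
  assert (Hinj : forall x y, a0 < x -> a0 < y -> f x = f y -> x = y).
  { intros x y Hx Hy Hxy. destruct (Rtotal_order x y) as [H|[H|H]]; auto.
    - generalize (Hinc x y Hx H); lra.
    - generalize (Hinc y x Hy H); lra. }
  assert (Hlb_ub : lb < ub) by (unfold lb, ub; lra).
  assert (Ha0lb : a0 < lb) by (unfold lb; lra).
  assert (Hflb : f lb < f r0) by (apply Hinc; unfold lb; lra).
  assert (Hfub : f r0 < f ub) by (apply Hinc; unfold ub; lra).
  assert (Hpsir0 : psi (f r0) = r0).
  { destruct (Hpsi (f r0)) as [H1 H2]; [lra|]. apply Hinj; auto; lra. }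
  assert (Hcont : continuity_pt psi (f r0)).
  { apply (continuity_pt_recip_interv f psi lb ub Hlb_ub).
    - intros x y Hx Hxy Hy. apply Hinc; lra.
    - intros x Hx1 Hx2. unfold comp, id. apply Hpsi; lra.
    - intros x Hx1 Hx2. apply Hpsi; lra.
    - intros a Ha. apply (cont_of_derive f a (df a)). apply Hd. lra.
    - lra. }
  assert (Prf : forall a, psi (f lb) <= a <= psi (f ub) -> derivable_pt f a).
  { intros a Ha. exists (df a). apply is_derive_Reals. apply Hd.
    destruct (Hpsi (f lb)) as [H1 _]; [lra|]. lra. }
  assert (Hincr : psi (f lb) <= psi (f r0) <= psi (f ub)).
  { destruct (Hpsi (f lb)) as [H1 H2]; [lra|]. destruct (Hpsi (f ub)) as [H3 H4]; [lra|].
    rewrite Hpsir0.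
    assert (psi (f lb) = lb) by (apply Hinj; lra).
    assert (psi (f ub) = ub) by (apply Hinj; lra). unfold lb, ub in *; lra. }
  assert (Hder : derivable_pt_lim psi (f r0) (1 / derive_pt f (psi (f r0)) (Prf (psi (f r0)) Hincr))).
  { apply (derivable_pt_lim_recip_interv f psi (f lb) (f ub) (f r0) Prf Hcont); try lra.
    - intros x Hx. unfold comp, id. apply Hpsi; auto.
    - rewrite (derive_pt_eq_0 f (psi (f r0)) (df (psi (f r0)))).
      + rewrite Hpsir0. generalize (Hpos r0 Hr0); lra.
      + apply is_derive_Reals. apply Hd. rewrite Hpsir0; auto. }
  rewrite (derive_pt_eq_0 f (psi (f r0)) (df (psi (f r0)))) in Hder.
  2: { apply is_derive_Reals. apply Hd. rewrite Hpsir0; auto. }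
  rewrite Hpsir0 in Hder. apply is_derive_Reals in Hder.
  assert (HL' : is_derive L (psi (f r0)) Ld) by (rewrite Hpsir0; auto).
  assert (Hc := is_derive_comp L psi (f r0) Ld _ HL' Hder).
  apply (is_derive_ext_loc (fun t => L (psi t))).
  - set (e := Rmin (f r0 - f lb) (f ub - f r0)).
    assert (He : 0 < e) by (apply Rmin_glb_lt; lra).
    exists (mkposreal e He). intros t Ht.
    unfold ball in Ht; simpl in Ht; unfold AbsRing_ball, abs, minus, plus, opp in Ht; simpl in Ht.
    apply Rabs_def2 in Ht.
    generalize (Rmin_l (f r0 - f lb) (f ub - f r0)) (Rmin_r (f r0 - f lb) (f ub - f r0)); fold e; intros.
    destruct (Hpsi t) as [H1 H2]; [lra|].
    rewrite <- H2 at 2. rewrite HW; auto. lra.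
  - replace (Ld / df r0) with (scal (1 / df r0) Ld); auto.
    unfold scal; simpl; unfold mult; simpl. field. generalize (Hpos r0 Hr0); lra.
Qed.

Definition kk p := (p - 1) * (3 - p).
Definition cc p := (p - 1) * (5 - p) / 4.

Lemma Psi_deriv (p : R) (U M X H : R -> R) (r Mv dX dH : R) :
  1 < p < 2 -> 1 < r -> 0 < U r -> 0 < M r ->
  is_derive U r (- M r) -> is_derive M r (M r * muf p r) ->
  is_derive X r dX -> is_derive H r dH ->
  let lm := (p - 1) * M r / U r in
  let Q := 2 / (p - 1) * (1 - bb p * U r * (r - 1) / (r * M r * (r + 1))) in
  dX = lm * H r * (1 - cc p * Q ^ 2) ->
  kk p * dH = lm * (X r - 2 * (2 - p) * H r - 2 * cc p * Q * H r) ->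
  Mv = r * lm ^ 2 * H r * (bb p * U r * (r - 1) / (r * M r * (r + 1))
          + 2 * r * (bb p * U r / (r * M r)) ^ 2 / (r + 1) ^ 2) ->
  is_derive (fun s => s * ((p - 1) * M s / U s) *
     (X s - kk p / 2 * (2 / (p - 1) * (1 - bb p * U s * (s - 1) / (s * M s * (s + 1)))) * H s)) r Mv.
Proof.
  intros Hp Hr HU HM dU dM HdX HdH lm Q EX EH EM.
  auto_derive.
  - repeat split; try (eexists; eauto); try lra.
    apply Rmult_integral_contrapositive; split; [apply Rmult_integral_contrapositive; split|]; lra.
  - replace (Derive (fun x => U x) r) with (- M r) by (symmetry; apply is_derive_unique; auto).
    replace (Derive (fun x => M x) r) with (M r * muf p r) by (symmetry; apply is_derive_unique; auto).
    replace (Derive (fun x => X x) r) with dX by (symmetry; apply is_derive_unique; auto).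
    replace (Derive (fun x => H x) r) with dH by (symmetry; apply is_derive_unique; auto).
    assert (EH' : dH = lm * (X r - 2 * (2 - p) * H r - 2 * cc p * Q * H r) / kk p).
    { rewrite <- EH. unfold kk. field. lra. }
    rewrite EM, EX, EH'. unfold lm, Q, muf, bb, kk, cc. field.
    repeat split; lra.
Qed.

Definition Qf p K u r := 2 / (p - 1) * (1 - bb p * u r * (r - 1) / (r * Mf p K r * (r + 1))).

Lemma W_facts p u W K : 1 < p < 2 -> 0 < K ->
  filterlim u (at_right 1) (locally 1) -> is_lim u p_infty 0 ->
  (forall r, 1 < r -> is_derive u r (- Mf p K r)) ->
  (forall r, 1 < r -> W (w_of p u r) = level_integral p u r) ->
  forall r, 1 < r -> 0 < W (w_of p u r) /\ Derive W (w_of p u r) = Qf p K u r * W (w_of p u r).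
Proof.
  intros Hp HK Hc Hl Hd HW r Hr.
  assert (Hub := u_bounds p u K ltac:(lra) Hc Hl Hd).
  assert (Hwd := w_deriv p u K Hp Hc Hl Hd).
  set (Lf := fun s => 4 * PI * s ^ 2 * ((p - 1) * Mf p K s / u s) ^ 2).
  assert (HL : forall s, 1 < s -> W (w_of p u s) = Lf s).
  { intros s Hs. rewrite HW; auto. unfold level_integral, Lf, grad_norm.
    rewrite (is_derive_unique _ _ _ (Hwd s Hs)). unfold lam.
    destruct (Hub s Hs) as [H1 H2]. assert (H3 := Mf_pos p K s).
    assert (H4 := phi_pos s ltac:(lra)).
    rewrite Rabs_pos_eq. field. split; lra.
    apply Rlt_le, Rdiv_lt_0_compat; [apply Rmult_lt_0_compat|]; lra. }
  destruct (Hub r Hr) as [Hu0 Hu1]. assert (HM := Mf_pos p K r).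
  assert (HPI := PI_RGT_0).
  set (lm := (p - 1) * Mf p K r / u r).
  set (dlm := (p - 1) * (Mf p K r * muf p r * u r + Mf p K r ^ 2) / u r ^ 2).
  set (Ld := 4 * PI * (2 * r * lm ^ 2 + r ^ 2 * (2 * lm * dlm))).
  assert (HLd : is_derive Lf r Ld).
  { unfold Lf. assert (H1 := Mf_deriv p K r ltac:(lra) ltac:(lra)). assert (H2 := Hd r Hr).
    auto_derive.
    - repeat split; try (eexists; eauto); try lra.
    - replace (Derive (fun x => Mf p K x) r) with (Mf p K r * muf p r) by (symmetry; apply is_derive_unique; auto).
      replace (Derive (fun x => u x) r) with (- Mf p K r) by (symmetry; apply is_derive_unique; auto).
      unfold Ld, lm, dlm. field. lra. }
  assert (HWd : is_derive W (w_of p u r) (Ld / lam p K u r)).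
  { apply (inv_derive (w_of p u) W Lf (lam p K u) 1 r Ld); auto.
    intros s Hs. unfold lam. destruct (Hub s Hs). apply Rdiv_lt_0_compat; auto.
    apply Rmult_lt_0_compat; [lra | apply Mf_pos]. }
  rewrite (is_derive_unique _ _ _ HWd). rewrite HL by auto.
  split.
  - unfold Lf. apply Rmult_lt_0_compat. apply Rmult_lt_0_compat; [lra|apply pow_lt; lra].
    apply pow_lt. apply Rdiv_lt_0_compat; [apply Rmult_lt_0_compat|]; lra.
  - unfold Ld, Lf, lm, dlm, lam, Qf, muf, bb. field. repeat split; lra.
Qed.

Lemma Qf_bounds p u K : 1 < p < 2 -> 0 < K ->
  filterlim u (at_right 1) (locally 1) -> is_lim u p_infty 0 ->
  (forall r, 1 < r -> is_derive u r (- Mf p K r)) ->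
  forall r, 1 < r -> 0 < Qf p K u r /\ Qf p K u r < 2 / (p - 1).
Proof.
  intros Hp HK Hc Hl Hd r Hr.
  destruct (u_bounds p u K ltac:(lra) Hc Hl Hd r Hr) as [Hu0 Hu1].
  assert (Hup := u_upper p u K Hp HK Hl Hd r Hr).
  assert (HM := Mf_pos p K r).
  assert (Hb : 0 < bb p) by (unfold bb; apply Rdiv_lt_0_compat; lra).
  set (y := bb p * u r * (r - 1) / (r * Mf p K r * (r + 1))).
  assert (Hy0 : 0 < y).
  { assert (0 < bb p * u r * (r - 1)) by (apply Rmult_lt_0_compat; [apply Rmult_lt_0_compat|]; lra).
    assert (0 < r * Mf p K r * (r + 1)) by (apply Rmult_lt_0_compat; [apply Rmult_lt_0_compat|]; lra).
    unfold y. apply Rdiv_lt_0_compat; assumption. }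
  assert (Hy1 : y < 1).
  { unfold y. apply (Rmult_lt_reg_r (r * Mf p K r * (r + 1))). repeat apply Rmult_lt_0_compat; lra.
    replace (bb p * u r * (r - 1) / (r * Mf p K r * (r + 1)) * (r * Mf p K r * (r + 1)))
      with (bb p * (r - 1) * u r) by (field; lra).
    apply (Rmult_lt_compat_l (bb p * (r - 1))) in Hup; [|apply Rmult_lt_0_compat; lra].
    replace (bb p * (r - 1) * (Mf p K r * r * (r + 1) / (bb p * (r - 1)))) with (Mf p K r * r * (r + 1)) in Hup by (field; lra).
    lra. }
  unfold Qf. fold y.
  assert (0 < 2 / (p - 1)) by (apply Rdiv_lt_0_compat; lra).
  split; nra.
Qed.

Lemma w_surj p u K : 1 < p < 2 ->
  filterlim u (at_right 1) (locally 1) -> is_lim u p_infty 0 ->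
  (forall r, 1 < r -> is_derive u r (- Mf p K r)) ->
  forall t, 0 < t -> exists r, 1 < r /\ w_of p u r = t.
Proof.
  intros Hp Hc Hl Hd t Ht.
  assert (Hub := u_bounds p u K ltac:(lra) Hc Hl Hd).
  assert (Hwd := w_deriv p u K Hp Hc Hl Hd).
  destruct (w_small p u Hp Hc t Ht) as [d [Hd0 Hd1]].
  set (r1 := 1 + d / 2).
  assert (Hr1 : w_of p u r1 < t) by (apply Hd1; unfold r1; lra).
  destruct (w_large p u Hp Hl (fun r Hr => proj1 (Hub r Hr)) t) as [N [HN1 HN2]].
  set (r2 := Rmax N r1 + 1).
  assert (Hr2 : t < w_of p u r2) by (apply HN2; unfold r2; generalize (Rmax_l N r1); lra).
  assert (Hr12 : r1 < r2) by (unfold r2; generalize (Rmax_r N r1); lra).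
  destruct (IVT_interv (fun r => w_of p u r - t) r1 r2) as [z [Hz1 Hz2]].
  - intros a Ha. apply continuity_pt_minus. apply (cont_of_derive _ a (lam p K u a)). apply Hwd. unfold r1 in *; lra.
    apply continuity_pt_const. intros x y; auto.
  - auto.
  - lra.
  - lra.
  - exists z. split; [unfold r1 in *; lra | lra].
Qed.

Lemma deriv_pos_left (f : R -> R) x l a : is_derive f x l -> 0 < l -> a < x ->
  (forall y, a < y < x -> 0 < f y) -> f x = 0 -> False.
Proof.
  intros Hd Hl Ha Hpos Hfx.
  apply is_derive_Reals in Hd.
  destruct (Hd (l / 2) ltac:(lra)) as [del Hdel].
  set (hh := - Rmin (del / 2) ((x - a) / 2)).
  assert (Hm : 0 < Rmin (del / 2) ((x - a) / 2)) by (apply Rmin_glb_lt; generalize (cond_pos del); lra).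
  assert (Hm1 := Rmin_l (del / 2) ((x - a) / 2)). assert (Hm2 := Rmin_r (del / 2) ((x - a) / 2)).
  assert (Hh0 : hh <> 0) by (unfold hh; lra).
  assert (Hhd : Rabs hh < del).
  { unfold hh. rewrite Rabs_Ropp, Rabs_pos_eq by lra. generalize (cond_pos del); lra. }
  specialize (Hdel hh Hh0 Hhd). rewrite Hfx, Rminus_0_r in Hdel.
  assert (0 < f (x + hh)) by (apply Hpos; unfold hh; lra).
  apply Rabs_def2 in Hdel.
  assert (f (x + hh) / hh < 0).
  { unfold Rdiv. assert (/ hh < 0) by (apply Rinv_lt_0_compat; unfold hh; lra). nra. }
  lra.
Qed.

Lemma cont_pos (f : R -> R) x : continuity_pt f x -> 0 < f x ->
  exists al, 0 < al /\ forall y, Rabs (y - x) < al -> 0 < f y.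
Proof.
  intros Hc Hp. destruct (Hc (f x) Hp) as [al [Hal Hal2]].
  exists al. split; auto. intros y Hy.
  destruct (Req_dec x y) as [E|E]. subst; auto.
  assert (Hd : R_dist (f y) (f x) < f x).
  { apply Hal2. split. split; [exact I | auto]. unfold R_dist; simpl; auto. }
  unfold R_dist in Hd. apply Rabs_def2 in Hd. lra.
Qed.

Lemma cont_neg (f : R -> R) x : continuity_pt f x -> f x < 0 ->
  exists al, 0 < al /\ forall y, Rabs (y - x) < al -> f y < 0.
Proof.
  intros Hc Hp. destruct (Hc (- f x) ltac:(lra)) as [al [Hal Hal2]].
  exists al. split; auto. intros y Hy.
  destruct (Req_dec x y) as [E|E]. subst; auto.
  assert (Hd : R_dist (f y) (f x) < - f x).
  { apply Hal2. split. split; [exact I | auto]. unfold R_dist; simpl; auto. }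
  unfold R_dist in Hd. apply Rabs_def2 in Hd. lra.
Qed.

Theorem proposition3p10 :
  forall p : R, 1 < p < 2 ->
  forall (u W : R -> R),
    radial_p_harmonic p u ->
    u 1 = 1 ->
    filterlim u (at_right 1) (locally 1) ->
    is_lim u p_infty 0 ->
    (forall r, 1 < r -> W (w_of p u r) = level_integral p u r) ->
    exists eps0 : R, 0 < eps0 /\
      forall eps : R, 0 < eps < eps0 ->
      forall g h : R -> R,
        system_S p W g h ->
        g 0 = -1 -> h 0 = eps ->
        filterlim g (at_right 0) (locally (g 0)) ->
        filterlim h (at_right 0) (locally (h 0)) ->
        forall t, 0 <= t -> 0 < h t /\ g t < 0.
Proof.
  intros p Hp u W Hh Hu1 Hc Hl HW.
  destruct (u_deriv_formula p u Hp Hh Hc Hl) as [K [HK Hd]].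
  exists (1 / 4). split; [lra|].
  intros eps Heps g h HS Hg0 Hh0 Hgc Hhc.
  assert (Hub := u_bounds p u K ltac:(lra) Hc Hl Hd).
  assert (Hwd := w_deriv p u K Hp Hc Hl Hd).
  assert (HWf := W_facts p u W K Hp HK Hc Hl Hd HW).
  assert (HQ := Qf_bounds p u K Hp HK Hc Hl Hd).
  assert (Hlam : forall r, 1 < r -> 0 < lam p K u r).
  { intros r Hr. unfold lam. destruct (Hub r Hr). apply Rdiv_lt_0_compat; auto.
    apply Rmult_lt_0_compat; [lra | apply Mf_pos]. }
  assert (Hwpos : forall r, 1 < r -> 0 < w_of p u r).
  { intros r Hr. destruct (Hub r Hr). unfold w_of.
    assert (ln (u r) < 0) by (rewrite <- ln_1; apply ln_increasing; lra). nra. }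
  set (X := fun s => - g (w_of p u s)).
  set (H := fun s => h (w_of p u s)).
  assert (Hode : forall r, 1 < r ->
     is_derive X r (lam p K u r * H r * (1 - cc p * Qf p K u r ^ 2)) /\
     exists dH, is_derive H r dH /\
       kk p * dH = lam p K u r * (X r - 2 * (2 - p) * H r - 2 * cc p * Qf p K u r * H r)).
  { intros r Hr.
    set (t := w_of p u r).
    assert (Ht : 0 < t) by (apply Hwpos; auto).
    destruct (HS t Ht) as [Hexg [Hexh [E1 E2]]].
    destruct (HWf r Hr) as [HW0 HWd]. fold t in HW0, HWd.
    rewrite HWd in E1, E2.
    set (Q := Qf p K u r) in *.
    destruct (HQ r Hr) as [HQ0 HQ1]. fold Q in HQ0, HQ1.
    assert (HW2 : 0 < W t ^ 2) by (apply pow_lt; auto).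
    assert (E2' : Derive g t + h t - cc p * h t * Q ^ 2 = 0).
    { assert (Hz : (Derive g t + h t - cc p * h t * Q ^ 2) * W t ^ 2 = 0) by (unfold cc in *; lra).
      apply Rmult_integral in Hz. destruct Hz; auto. lra. }
    assert (E1' : g t - 2 * (p - 2) * h t + kk p * Derive h t + 2 * cc p * h t * Q = 0).
    { assert (Hz : (g t - 2 * (p - 2) * h t + kk p * Derive h t + 2 * cc p * h t * Q) * (Q * W t ^ 2) = 0)
        by (unfold cc, kk in *; lra).
      apply Rmult_integral in Hz. destruct Hz; auto.
      assert (0 < Q * W t ^ 2) by (apply Rmult_lt_0_compat; auto). lra. }
    assert (Hgd : is_derive (fun s => g (w_of p u s)) r (lam p K u r * Derive g t)).
    { apply (is_derive_comp g (w_of p u) r (Derive g t) (lam p K u r)).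
      apply Derive_correct; auto. apply Hwd; auto. }
    assert (Hhd : is_derive H r (lam p K u r * Derive h t)).
    { apply (is_derive_comp h (w_of p u) r (Derive h t) (lam p K u r)).
      apply Derive_correct; auto. apply Hwd; auto. }
    split.
    - assert (Hx : is_derive X r (- (lam p K u r * Derive g t))).
      { apply (is_derive_opp (fun s => g (w_of p u s))). auto. }
      replace (lam p K u r * H r * (1 - cc p * Q ^ 2)) with (- (lam p K u r * Derive g t)); auto.
      unfold H. fold t.
      replace (Derive g t) with (- h t + cc p * h t * Q ^ 2) by lra. ring.
    - exists (lam p K u r * Derive h t). split; auto.
      unfold X, H. fold t.
      replace (kk p * (lam p K u r * Derive h t)) with (lam p K u r * (kk p * Derive h t)) by ring.
      replace (kk p * Derive h t) with (- g t + 2 * (p - 2) * h t - 2 * cc p * h t * Q) by lra.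
      ring. }
  set (Psi := fun s => s * ((p - 1) * Mf p K s / u s) *
     (X s - kk p / 2 * (2 / (p - 1) * (1 - bb p * u s * (s - 1) / (s * Mf p K s * (s + 1)))) * H s)).
  set (Bf := fun s => bb p * u s * (s - 1) / (s * Mf p K s * (s + 1))
          + 2 * s * (bb p * u s / (s * Mf p K s)) ^ 2 / (s + 1) ^ 2).
  set (Mv := fun s => s * ((p - 1) * Mf p K s / u s) ^ 2 * H s * Bf s).
  assert (HPsi : forall r, 1 < r -> is_derive Psi r (Mv r)).
  { intros r Hr. destruct (Hode r Hr) as [HX [dH [HH EH]]]. destruct (Hub r Hr) as [Hu0 _].
    apply (Psi_deriv p u (Mf p K) X H r (Mv r) _ dH Hp Hr Hu0 (Mf_pos p K r) (Hd r Hr)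
       (Mf_deriv p K r ltac:(lra) ltac:(lra)) HX HH).
    - reflexivity.
    - rewrite EH. reflexivity.
    - reflexivity. }
  assert (Hb : 0 < bb p) by (unfold bb; apply Rdiv_lt_0_compat; lra).
  assert (HBf : forall s, 1 < s -> 0 < Bf s).
  { intros s Hs. destruct (Hub s Hs) as [Hu0 _]. assert (HM := Mf_pos p K s).
    unfold Bf.
    assert (0 < bb p * u s * (s - 1)) by (apply Rmult_lt_0_compat; [apply Rmult_lt_0_compat|]; lra).
    assert (0 < s * Mf p K s * (s + 1)) by (apply Rmult_lt_0_compat; [apply Rmult_lt_0_compat|]; lra).
    assert (0 < bb p * u s * (s - 1) / (s * Mf p K s * (s + 1))) by (apply Rdiv_lt_0_compat; auto).
    assert (0 <= 2 * s * (bb p * u s / (s * Mf p K s)) ^ 2 / (s + 1) ^ 2).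
    { apply Rmult_le_pos. apply Rmult_le_pos. lra. apply pow2_ge_0.
      left; apply Rinv_0_lt_compat, pow_lt; lra. }
    lra. }
  assert (Psi_mono : forall a b, 1 < a -> a < b -> (forall x, a < x < b -> 0 < H x) -> Psi a <= Psi b).
  { intros a b Ha Hab Hpos.
    destruct (mvt_closed Psi Mv a b Hab) as [c [Hc1 Hc2]].
    - intros c0 Hc0. apply HPsi. lra.
    - assert (0 <= Mv c); [|nra].
      unfold Mv. assert (0 < H c) by (apply Hpos; lra). assert (0 < Bf c) by (apply HBf; lra).
      apply Rmult_le_pos; [apply Rmult_le_pos; [apply Rmult_le_pos|]|]; try lra. apply pow2_ge_0. }
  assert (Psi_eq : forall r, Psi r = r * lam p K u r * (X r - kk p / 2 * Qf p K u r * H r)).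
  { intros r. reflexivity. }
  assert (Hkq : forall r, 1 < r -> 0 < kk p / 2 * Qf p K u r < 3 - p).
  { intros r Hr. destruct (HQ r Hr) as [Q0 Q1]. unfold kk.
    split. apply Rmult_lt_0_compat; [|auto]. apply Rdiv_lt_0_compat; [apply Rmult_lt_0_compat|]; lra.
    apply (Rmult_lt_compat_l ((p - 1) * (3 - p) / 2)) in Q1.
    replace ((p - 1) * (3 - p) / 2 * (2 / (p - 1))) with (3 - p) in Q1 by (field; lra). lra.
    apply Rdiv_lt_0_compat; [apply Rmult_lt_0_compat|]; lra. }
  rewrite Hg0 in Hgc. rewrite Hh0 in Hhc.
  destruct (at_right_spec g 0 (-1) Hgc (eps / 2) ltac:(lra)) as [d1 [Hd1 Hg1]].
  destruct (at_right_spec h 0 eps Hhc (eps / 2) ltac:(lra)) as [d2 [Hd2 Hh1]].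
  destruct (w_small p u Hp Hc (Rmin d1 d2) ltac:(apply Rmin_glb_lt; lra)) as [del [Hdel Hw1]].
  assert (Hnear : forall r, 1 < r < 1 + del -> eps / 2 < H r < 3 * eps / 2 /\ 1 - eps / 2 < X r).
  { intros r Hr. specialize (Hw1 r Hr). assert (Hr1 : 1 < r) by lra.
    specialize (Hwpos r Hr1).
    generalize (Rmin_l d1 d2) (Rmin_r d1 d2); intros.
    specialize (Hg1 (w_of p u r) ltac:(lra)). specialize (Hh1 (w_of p u r) ltac:(lra)).
    apply Rabs_def2 in Hg1. apply Rabs_def2 in Hh1. unfold X, H. lra. }
  assert (HPsi_near : forall r, 1 < r < 1 + del -> 0 < Psi r).
  { intros r Hr. rewrite Psi_eq. destruct (Hnear r Hr) as [[HH1 HH2] HX1].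
    assert (Hr1 : 1 < r) by lra. specialize (Hkq r Hr1). specialize (Hlam r Hr1).
    assert (0 < X r - kk p / 2 * Qf p K u r * H r) by nra.
    apply Rmult_lt_0_compat; auto. apply Rmult_lt_0_compat; lra. }
  assert (HcH : forall r, 1 < r -> continuity_pt H r).
  { intros r Hr. destruct (Hode r Hr) as [_ [dH [HH _]]]. apply (cont_of_derive H r dH HH). }
  set (r0 := 1 + del / 2).
  assert (Hr0 : 1 < r0 < 1 + del) by (unfold r0; lra).
  assert (HHpos : forall r, 1 < r -> 0 < H r).
  { intros r1 Hr1. apply Rnot_le_lt. intros Hneg.
    assert (Hr01 : r0 < r1).
    { apply Rnot_le_lt. intros Hle. destruct (Hnear r1 ltac:(lra)) as [[HH1 _] _]. lra. }
    set (E := fun s => r0 <= s <= r1 /\ forall x, r0 <= x <= s -> 0 < H x).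
    assert (Hbd : bound E) by (exists r1; intros s [Hs _]; lra).
    assert (HE0 : E r0).
    { split; [lra|]. intros x Hx. replace x with r0 by lra. destruct (Hnear r0 Hr0) as [[? _] _]. lra. }
    destruct (completeness E Hbd (ex_intro _ r0 HE0)) as [m [Hub' Hlub]].
    assert (Hm0 : r0 <= m) by (apply Hub'; auto).
    assert (Hm1 : m <= r1) by (apply Hlub; intros s [Hs _]; lra).
    assert (Hleft : forall x, r0 <= x < m -> 0 < H x).
    { intros x Hx. apply Rnot_le_lt; intros Hx2.
      assert (m <= x); [|lra]. apply Hlub. intros s [Hs1 Hs2]. apply Rnot_lt_le; intros Hxs.
      assert (0 < H x) by (apply Hs2; lra). lra. }
    assert (Hm1' : 1 < m) by lra.
    assert (Hm_le : H m <= 0).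
    { apply Rnot_lt_le; intros Hpos.
      destruct (cont_pos H m (HcH m Hm1') Hpos) as [al [Hal Hal2]].
      destruct (Rle_lt_or_eq_dec m r1 Hm1) as [Hlt|Heq].
      - set (s' := Rmin (m + al / 2) r1).
        assert (Hs'1 : m < s') by (unfold s'; apply Rmin_glb_lt; lra).
        assert (Hs'2 : s' <= r1) by (unfold s'; apply Rmin_r).
        assert (Hs'3 : s' <= m + al / 2) by (unfold s'; apply Rmin_l).
        assert (E s').
        { split; [lra|]. intros x Hx. destruct (Rlt_or_le x m) as [Hxm|Hxm].
          - apply Hleft; lra.
          - apply Hal2. rewrite Rabs_pos_eq; lra. }
        assert (s' <= m) by (apply Hub'; auto). lra.
      - rewrite Heq in Hpos. lra. }
    assert (Hmr0 : r0 < m).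
    { destruct (Rle_lt_or_eq_dec r0 m Hm0) as [Hlt|Heq]; auto.
      rewrite <- Heq in Hm_le. destruct (Hnear r0 Hr0) as [[? _] _]. lra. }
    assert (Hm_ge : 0 <= H m).
    { apply Rnot_lt_le; intros Hn.
      destruct (cont_neg H m (HcH m Hm1') Hn) as [al [Hal Hal2]].
      set (x := Rmax (m - al / 2) r0).
      assert (Hx1 : x < m) by (unfold x; apply Rmax_lub_lt; lra).
      assert (Hx2 : r0 <= x) by (unfold x; apply Rmax_r).
      assert (Hx3 : m - al / 2 <= x) by (unfold x; apply Rmax_l).
      assert (0 < H x) by (apply Hleft; lra).
      assert (H x < 0) by (apply Hal2; rewrite Rabs_left; lra). lra. }
    assert (HmZ : H m = 0) by lra.
    assert (HPm : 0 < Psi m).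
    { assert (Psi r0 <= Psi m) by (apply Psi_mono; try lra; intros x Hx; apply Hleft; lra).
      generalize (HPsi_near r0 Hr0). lra. }
    rewrite Psi_eq, HmZ in HPm.
    assert (HXm : 0 < X m).
    { assert (Hl0 := Hlam m Hm1').
      assert (0 < m * lam p K u m) by (apply Rmult_lt_0_compat; lra).
      replace (X m - kk p / 2 * Qf p K u m * 0) with (X m) in HPm by ring.
      nra. }
    destruct (Hode m Hm1') as [_ [dH [HH EH]]].
    rewrite HmZ in EH.
    assert (Hk : 0 < kk p) by (unfold kk; apply Rmult_lt_0_compat; lra).
    assert (HdH : 0 < dH).
    { assert (Hl0 := Hlam m Hm1').
      assert (0 < kk p * dH) by (rewrite EH; apply Rmult_lt_0_compat; lra).
      nra. }
    apply (deriv_pos_left H m dH r0 HH HdH Hmr0); auto.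
    intros y Hy. apply Hleft; lra. }
  intros t [Ht|Ht].
  - destruct (w_surj p u K Hp Hc Hl Hd t Ht) as [r [Hr Hwr]].
    assert (HHr := HHpos r Hr).
    assert (HXr : 0 < X r).
    { destruct (Rlt_or_le r (1 + del)) as [Hrd|Hrd].
      - destruct (Hnear r (conj Hr Hrd)) as [_ ?]. lra.
      - assert (Psi r0 <= Psi r) by (apply Psi_mono; try lra; intros x Hx; apply HHpos; lra).
        assert (HP := HPsi_near r0 Hr0).
        rewrite Psi_eq in H0. rewrite <- Psi_eq in H0.
        assert (0 < Psi r) by lra.
        rewrite Psi_eq in H1.
        assert (Hl0 := Hlam r Hr). destruct (Hkq r Hr).
        assert (0 < r * lam p K u r) by (apply Rmult_lt_0_compat; lra).
        assert (0 < X r - kk p / 2 * Qf p K u r * H r) by nra.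
        nra. }
    unfold X, H in *. rewrite Hwr in HHr, HXr. split; lra.
  - subst t. rewrite Hh0, Hg0. lra.
Qed.
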